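(* Let $I\subset\mathbb{K}[S_M]$ be an ideal and $G$ a sparse Gröbner basis of $I$ with respect to $\prec$. Then $\chi^{-1}(G)=\{\chi^{-1}(g):g\in G\}$ is a sparse Gröbner basis, with respect to $\prec_h$, of the ideal $\chi^{-1}(I)\subset\mathbb{K}[S_M^h]$ generated by the homogenizations of all elements of $I$.
   Context: Let $\mathbb{K}$ be a field of characteristic $0$, $M\subset\mathbb{R}^n$ a polytope with $0\in M$, $S_M\subset\mathbb{Z}^n$ the affine semigroup generated by $M\cap\mathbb{Z}^n$ and $S_M^h\subset\mathbb{Z}^{n+1}$ the one generated by $\{(s,1):s\in M\cap\mathbb{Z}^n\}$, both assumed pointed. $\mathbb{K}[S]$ is the semigroup algebra with monomials $X^s$, $X^sX^t=X^{s+t}$; $\mathbb{K}[S_M^h]$ is graded by $\deg X^{(s,d)}=d$. $\chi:\mathbb{K}[S_M^h]\to\mathbb{K}[S_M]$, $X^{(s,d)}\mapsto X^s$. The affine degree $\delta^A(X^s)$ is the least $d$ with $(s,d)\in S_M^h$, extended to polynomials by the maximum over the support; the homogenization of $f=\sum c_sX^s$ is $\chi^{-1}(f)=\sum c_sX^{(s,\delta^A(f))}$; the sparse degree of $f\in\mathbb{K}[S_M^h]$ is $\delta(f)=\delta^A(\chi(f))$. Fix a monomial order $<_M$ on $\mathbb{K}[S_M]$; the sparse order is $X^s\prec X^r$ iff $\delta^A(X^s)<\delta^A(X^r)$, or equality and $X^s<_MX^r$; the graded sparse order is $X^{(s,d)}\prec_hX^{(r,d')}$ iff $d<d'$, or $d=d'$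 and $X^s\prec X^r$. Divisibility: $X^{(s,d_s)}\mid_\delta X^{(r,d_r)}$ if some monomial $X^{(t,d_t)}$ satisfies $X^{(s,d_s)}X^{(t,d_t)}=X^{(r,d_r)}$ and $\delta(X^{(s,d_s)})+\delta(X^{(t,d_t)})=\delta(X^{(r,d_r)})$; for monomials of $\mathbb{K}[S_M]$, $X^s\mid_\delta X^r$ iff $\chi^{-1}(X^s)\mid_\delta\chi^{-1}(X^r)$. A sparse Gröbner basis of an ideal (of $\mathbb{K}[S_M]$ w.r.t. $\prec$, resp. of $\mathbb{K}[S_M^h]$ w.r.t. $\prec_h$) is a subset of the ideal generating it such that every nonzero element $f$ of the ideal has some element $g$ of the subset with $\mathrm{LM}(g)\mid_\delta\mathrm{LM}(f)$. *)

(* Defs.v *)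
From HB Require Import structures.
From mathcomp Require Import all_boot all_order all_algebra.
From mathcomp Require Import finmap.
From mathcomp Require Import reals.
From mathcomp.multinomials Require Import monalg.
From Stdlib Require Import ClassicalEpsilon.

Set Implicit Arguments.
Unset Strict Implicit.
Unset Printing Implicit Defensive.

Import Order.TTheory GRing.Theory Num.Theory.
Local Open Scope ring_scope.

(* Generic semigroup algebras K[S] for S a subset of an additive group E
   (E = Z^n or Z^(n+1)): elements of K[S] are the finitely supported
   K-valued functions on E (monalg's {malg K[E]}) with support in S;
   the monomial X^s is << s >>, and X^s X^t = X^(s+t).                  *)
Section SemigroupAlgebra.
Variables (K : fieldType) (E : zmodType).

Definition spoly := {malg K[E]}.

Definition pmul (f g : spoly) : spoly :=
  \sum_(s <- msupp f) \sum_(t <- msupp g) << f@_s * g@_t *g (s + t) >>.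

Definition inKS (S : E -> Prop) (f : spoly) : Prop :=
  forall e, e \in msupp f -> S e.

Definition is_ideal (S : E -> Prop) (I : spoly -> Prop) : Prop :=
  [/\ forall f, I f -> inKS S f,
      I 0,
      forall f g, I f -> I g -> I (f + g) &
      forall h f, inKS S h -> I f -> I (pmul h f)].

Definition gen_ideal (S : E -> Prop) (G : spoly -> Prop) (f : spoly) : Prop :=
  forall J, is_ideal S J -> (forall g, G g -> J g) -> J f.

Definition is_LM (lt : E -> E -> Prop) (f : spoly) (m : E) : Prop :=
  m \in msupp f /\ forall m', m' \in msupp f -> m' <> m -> lt m' m.

Definition sparse_GB (S : E -> Prop) (lt div : E -> E -> Prop)
    (I G : spoly -> Prop) : Prop :=
  [/\ forall g, G g -> I g,
      forall f, I f <-> gen_ideal S G f &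
      forall f, I f -> f <> 0 ->
        exists g mg mf, [/\ G g, is_LM lt g mg, is_LM lt f mf & div mg mf]].

Definition pointed (S : E -> Prop) : Prop :=
  forall s, S s -> S (- s) -> s = 0.

End SemigroupAlgebra.

Definition monomial_order (n : nat) (S : 'rV[int]_n -> Prop)
    (lt : 'rV[int]_n -> 'rV[int]_n -> Prop) : Prop :=
  [/\ forall s, S s -> ~ lt s s,
      forall s t u, S s -> S t -> S u -> lt s t -> lt t u -> lt s u,
      forall s t, S s -> S t -> s <> t -> lt s t \/ lt t s,
      forall s t u, S s -> S t -> S u -> lt s t -> lt (s + u) (t + u) &
      forall s, S s -> s <> 0 -> lt 0 s].

Section Polytope.
Variables (R : realType) (n : nat) (V : seq 'rV[R]_n).

Definition inM (x : 'rV[R]_n) : Prop :=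
  exists lam : 'I_(size V) -> R,
    [/\ forall i, 0 <= lam i,
        \sum_i lam i = 1 &
        x = \sum_i lam i *: V`_i].

Definition latM (s : 'rV[int]_n) : Prop := inM (map_mx (fun z : int => z%:~R) s).

Definition SM (s : 'rV[int]_n) : Prop :=
  exists l : seq 'rV[int]_n, (forall a, a \in l -> latM a) /\ s = \sum_(a <- l) a.

Definition SMh (u : 'rV[int]_n * int) : Prop :=
  exists l : seq 'rV[int]_n, [/\ forall a, a \in l -> latM a,
     u.1 = \sum_(a <- l) a & u.2 = (size l)%:Z].

Lemma deltaA_ex_aux (s : 'rV[int]_n) :
  (exists d : nat, SMh (s, d%:Z)) ->
  exists d : nat, (fun d => is_left (excluded_middle_informative (SMh (s, d%:Z)))) d.
Proof.
move=> [d Hd]; exists d; case: excluded_middle_informative => //.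
Qed.

Definition deltaA (s : 'rV[int]_n) : nat :=
  match excluded_middle_informative (exists d : nat, SMh (s, d%:Z)) with
  | left H => ex_minn (deltaA_ex_aux H)
  | right _ => 0%N
  end.

Definition deltaA_poly (K : fieldType) (f : spoly K 'rV[int]_n) : nat :=
  (\max_(s <- msupp f) deltaA s)%N.

Definition homogenize (K : fieldType) (f : spoly K 'rV[int]_n) : spoly K ('rV[int]_n * int)%type :=
  \sum_(s <- msupp f) << f@_s *g (s, (deltaA_poly f)%:Z) >>.

Definition sparse_delta (u : 'rV[int]_n * int) : nat := deltaA u.1.

Definition sparse_lt (ltM : 'rV[int]_n -> 'rV[int]_n -> Prop) (s r : 'rV[int]_n) : Prop :=
  (deltaA s < deltaA r)%N \/ (deltaA s = deltaA r /\ ltM s r).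

Definition graded_lt (ltM : 'rV[int]_n -> 'rV[int]_n -> Prop)
    (u v : 'rV[int]_n * int) : Prop :=
  u.2 < v.2 \/ (u.2 = v.2 /\ sparse_lt ltM u.1 v.1).

Definition div_h (u v : 'rV[int]_n * int) : Prop :=
  exists w, [/\ SMh w, u + w = v & (sparse_delta u + sparse_delta w)%N = sparse_delta v].

Definition div_S (s r : 'rV[int]_n) : Prop :=
  div_h (s, (deltaA s)%:Z) (r, (deltaA r)%:Z).

Definition hom_ideal (K : fieldType) (I : spoly K 'rV[int]_n -> Prop) :
    spoly K ('rV[int]_n * int)%type -> Prop :=
  gen_ideal SMh (fun p => exists f, I f /\ p = homogenize f).

End Polytope.

(* Main.v *)
Require Import Defs.
From HB Require Import structures.
From mathcomp Require Import all_boot all_order all_algebra.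
From mathcomp Require Import finmap.
From mathcomp Require Import reals.
From mathcomp.multinomials Require Import monalg.
From Stdlib Require Import ClassicalEpsilon.
From mathcomp Require Import zify.

Set Implicit Arguments.
Unset Strict Implicit.
Unset Printing Implicit Defensive.

Import Order.TTheory GRing.Theory Num.Theory.
Local Open Scope ring_scope.
Section Gen.
Variables (K : fieldType) (E E' : zmodType).

Lemma big_fset_single (T : choiceType) (A : {fset T}) (F : T -> K) y :
  (forall k, k \in A -> k != y -> F k = 0) ->
  \sum_(k <- A) F k = if y \in A then F y else 0.
Proof.
move=> H; case: ifP => yA.
  rewrite (big_fsetD1 y) //= big1_fset ?addr0 // => k; rewrite in_fsetD1 => /andP[ky kA] _.
  exact: H.
rewrite big1_fset // => k kA _; apply: H => //; apply/eqP => eky; by rewrite -eky kA in yA.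
Qed.

Lemma coef_sum_inj (A : {fset E}) (F : E -> K) (phi : E -> E') y :
  injective phi ->
  (\sum_(k <- A) << F k *g phi k >> : spoly K E')@_(phi y) = if y \in A then F y else 0.
Proof.
move=> inj; rewrite raddf_sum /=.
rewrite (@big_fset_single _ A (fun k => (<< F k *g phi k >> : spoly K E')@_(phi y)) y).
  by rewrite mcoeffUU.
by move=> k _ ky; rewrite mcoeffU (inj_eq inj) (negbTE ky).
Qed.

Lemma coef_sum_out (A : {fset E}) (F : E -> K) (phi : E -> E') x :
  (forall k, k \in A -> phi k != x) ->
  (\sum_(k <- A) << F k *g phi k >> : spoly K E')@_x = 0.
Proof.
move=> H; rewrite raddf_sum /= big1_fset // => k kA _.
by rewrite mcoeffU (negbTE (H k kA)).
Qed.

End Gen.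
Section Gen2.
Variables (K : fieldType) (E : zmodType).
Lemma pmul_monoE (c : K) (u : E) (f : spoly K E) :
  c != 0 -> pmul << c *g u >> f = \sum_(t <- msupp f) << c * f@_t *g (u + t) >>.
Proof. by move=> c0; rewrite /pmul msuppU (negbTE c0) big_seq_fset1 mcoeffUU. Qed.

Lemma pmul_mono_coef (c : K) (u : E) (f : spoly K E) w :
  (pmul << c *g u >> f)@_w = c * f@_(w - u).
Proof.
have [->|c0] := eqVneq c 0.
  by rewrite /pmul monalgU0 msupp0 big_seq_fset0 mcoeff0 mul0r.
rewrite pmul_monoE //.
have -> : w = u + (w - u) by rewrite addrC subrK.
rewrite (@coef_sum_inj K E E _ (fun t => c * f@_t) (fun t => u + t)); last exact: addrI.
rewrite [u + _]addrC addrK; case: ifP => //; rewrite -mcoeff_neq0 => /negbFE/eqP ->.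
by rewrite mulr0.
Qed.

Lemma pmul_decomp (h f : spoly K E) :
  pmul h f = \sum_(u <- msupp h) pmul << h@_u *g u >> f.
Proof.
rewrite /pmul; apply: eq_big_seq => u uh.
by rewrite msuppU (negbTE (_ : h@_u != 0)) ?mcoeff_neq0 // big_seq_fset1 mcoeffUU.
Qed.

Lemma pmul0r (f : spoly K E) : pmul 0 f = 0.
Proof. by rewrite /pmul msupp0 big_seq_fset0. Qed.

Lemma pmulr0 (f : spoly K E) : pmul f 0 = 0.
Proof. by rewrite /pmul big1 // => u _; rewrite msupp0 big_seq_fset0. Qed.

End Gen2.
Lemma pairD (A B : zmodType) (u v : A * B) : u + v = (u.1 + v.1, u.2 + v.2).
Proof. by []. Qed.
Lemma pairB (A B : zmodType) (u v : A * B) : u - v = (u.1 - v.1, u.2 - v.2).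
Proof. by []. Qed.
Lemma pair0 (A B : zmodType) : (0 : A * B) = (0, 0).
Proof. by []. Qed.
Section Poly.
Variables (R : realType) (n : nat) (V : seq 'rV[R]_n).
Hypothesis M0 : inM V 0.
Local Notation E := 'rV[int]_n.

Lemma latM0 : latM V 0.
Proof.
rewrite /latM; have -> : map_mx (fun z : int => z%:~R) (0 : E) = 0 :> 'rV[R]_n.
  by apply/matrixP => i j; rewrite !mxE.
exact: M0.
Qed.

Lemma SMh_nat u : SMh V u -> exists d : nat, u.2 = d%:Z.
Proof. by case=> l [_ _ ->]; exists (size l). Qed.

Lemma SMh_SM u : SMh V u -> SM V u.1.
Proof. by case=> l [H1 H2 _]; exists l. Qed.

Lemma SM_SMh s : SM V s -> exists d : nat, SMh V (s, d%:Z).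
Proof. by case=> l [H1 H2]; exists (size l); exists l. Qed.

Lemma SMhD u v : SMh V u -> SMh V v -> SMh V (u + v).
Proof.
case=> l1 [H1 H2 H3] [l2 [H4 H5 H6]]; exists (l1 ++ l2); split.
- by move=> a; rewrite mem_cat => /orP[]; [apply: H1|apply: H4].
- by rewrite big_cat /= H2 H5.
- by rewrite size_cat /= H3 H6 PoszD.
Qed.

Lemma SMh0k (k : nat) : SMh V (0, k%:Z).
Proof.
exists (nseq k 0); split => //.
- by move=> a /nseqP [-> _]; exact: latM0.
- by rewrite /= big_nseq; elim: k => //= k <-; rewrite addr0.
- by rewrite size_nseq.
Qed.

Lemma SMh_pad s (d k : nat) : SMh V (s, d%:Z) -> SMh V (s, (d + k)%N%:Z).
Proof.
move=> H; have := SMhD H (SMh0k k).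
by rewrite pairD /= addr0 PoszD.
Qed.

Lemma deltaA_spec s : SM V s ->
  SMh V (s, (deltaA V s)%:Z) /\ forall d : nat, SMh V (s, d%:Z) -> (deltaA V s <= d)%N.
Proof.
move=> /SM_SMh Hs; rewrite /deltaA; case: excluded_middle_informative => [H|//].
case: ex_minnP => m Hm Hmin; split.
  by move: Hm; case: excluded_middle_informative.
move=> d Hd; apply: Hmin; by case: excluded_middle_informative.
Qed.

Lemma deltaA_SMh s : SM V s -> SMh V (s, (deltaA V s)%:Z).
Proof. by move=> /deltaA_spec []. Qed.

Lemma deltaA_min s (d : nat) : SMh V (s, d%:Z) -> (deltaA V s <= d)%N.
Proof. move=> H; have /deltaA_spec [_ ->] // : SM V s by exact: (SMh_SM H). Qed.

Lemma SMh_ge s (d : nat) : SM V s -> (deltaA V s <= d)%N -> SMh V (s, d%:Z).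
Proof. by move=> Hs /subnKC <-; apply: SMh_pad; apply: deltaA_SMh. Qed.

Lemma SMh_deg u : SMh V u -> exists2 d : nat, u.2 = d%:Z & (deltaA V u.1 <= d)%N.
Proof.
move=> H; have [d Hd] := SMh_nat H; exists d => //.
by apply: deltaA_min; rewrite -Hd -surjective_pairing.
Qed.

Lemma deltaA_sub a b : SM V a -> SM V b ->
  (deltaA V (a + b) <= deltaA V a + deltaA V b)%N.
Proof.
move=> Ha Hb; apply: deltaA_min.
have := SMhD (deltaA_SMh Ha) (deltaA_SMh Hb).
by rewrite pairD /= -PoszD.
Qed.

Lemma SM_add a b : SM V a -> SM V b -> SM V (a + b).
Proof.
move=> Ha Hb; have := SMhD (deltaA_SMh Ha) (deltaA_SMh Hb).
by move/SMh_SM.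
Qed.

End Poly.
Section LMgen.
Variables (K : fieldType) (E : zmodType) (S : E -> Prop) (lt : E -> E -> Prop).
Hypothesis lt_irr : forall s, S s -> ~ lt s s.
Hypothesis lt_trans : forall s t u, S s -> S t -> S u -> lt s t -> lt t u -> lt s u.
Hypothesis lt_total : forall s t, S s -> S t -> s <> t -> lt s t \/ lt t s.

Lemma max_exists (l : seq E) : l <> [::] -> (forall x, x \in l -> S x) ->
  exists m, m \in l /\ forall x, x \in l -> x <> m -> lt x m.
Proof.
elim: l => [//|a l IH] _ Hl.
have Sa : S a by apply: Hl; rewrite inE eqxx.
case: l IH Hl => [|b l] IH Hl.
  by exists a; split; [rewrite inE eqxx|move=> x; rewrite inE => /eqP].
have Hl' : forall x, x \in b :: l -> S x by move=> x xl; apply: Hl; rewrite inE xl orbT.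
have [//|m [ml Hm]] := IH _ Hl'.
have Sm : S m by apply: Hl; rewrite inE ml orbT.
have [->|am] := eqVneq a m.
  exists m; split; first by rewrite inE eqxx.
  move=> x; rewrite inE => /orP[/eqP -> //|xl] xm; exact: Hm.
have [lam|lma] := lt_total Sa Sm (elimN eqP am).
  exists m; split; first by rewrite inE ml orbT.
  move=> x; rewrite inE => /orP[/eqP -> //|xl] xm; exact: Hm.
exists a; split; first by rewrite inE eqxx.
move=> x; rewrite inE => /orP[/eqP -> //|xl] xa.
have [->|xm] := eqVneq x m; first done.
apply: (lt_trans (Hl x _) Sm Sa) => //; [by rewrite inE xl orbT| exact: Hm (elimN eqP xm)].
Qed.

Lemma msupp_nonempty (f : spoly K E) : f <> 0 -> exists k, k \in msupp f.
Proof.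
move=> f0; apply/not_all_not_ex => H; apply: f0; apply/malgP => k.
by rewrite mcoeff0; apply: mcoeff_outdom; apply/negP; apply: H.
Qed.

Lemma LM_exists (f : spoly K E) : f <> 0 -> inKS S f -> exists m, is_LM lt f m.
Proof.
move=> f0 Hf; have [k kf] := msupp_nonempty f0.
have [|//|m [m1 m2]] := @max_exists (msupp f).
  by move=> e; move: kf; rewrite -[k \in msupp f]/(k \in enum_fset (msupp f)) e.
by exists m; split.
Qed.

Lemma LM_unique (f : spoly K E) m1 m2 : inKS S f -> is_LM lt f m1 -> is_LM lt f m2 -> m1 = m2.
Proof.
move=> Hf [a1 b1] [a2 b2]; have [//|ne] := eqVneq m1 m2.
have S1 := Hf _ a1; have S2 := Hf _ a2.
have h1 := b2 _ a1 (elimN eqP ne); have h2 : lt m2 m1 by apply: (b1 _ a2) => e; rewrite e eqxx in ne.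
by case: (lt_irr S1 (lt_trans S1 S2 S1 h1 h2)).
Qed.
End LMgen.
Section Ord.
Variables (R : realType) (n : nat) (V : seq 'rV[R]_n).
Variable ltM : 'rV[int]_n -> 'rV[int]_n -> Prop.
Hypothesis ltM_order : monomial_order (SM V) ltM.
Local Notation E := 'rV[int]_n.
Local Notation slt := (sparse_lt V ltM).
Local Notation glt := (graded_lt V ltM).

Lemma sp_irr s : SM V s -> ~ slt s s.
Proof. case: ltM_order => H _ _ _ _ Hs [|[_]]; [by rewrite ltnn|exact: H]. Qed.

Lemma sp_trans s t u : SM V s -> SM V t -> SM V u -> slt s t -> slt t u -> slt s u.
Proof.
case: ltM_order => _ H _ _ _ Hs Ht Hu [h1|[e1 h1]] [h2|[e2 h2]].
- by left; apply: ltn_trans h2.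
- by left; rewrite -e2.
- by left; rewrite e1.
- by right; split; [rewrite e1|apply: H h1 h2].
Qed.

Lemma sp_total s t : SM V s -> SM V t -> s <> t -> slt s t \/ slt t s.
Proof.
case: ltM_order => _ _ H _ _ Hs Ht st.
case: (ltngtP (deltaA V s) (deltaA V t)) => e; [by left; left|by right; left|].
by case: (H _ _ Hs Ht st) => h; [left|right]; right.
Qed.

Lemma gr_irr u : SMh V u -> ~ glt u u.
Proof. move=> /SMh_SM Hu [|[_]]; [by rewrite ltxx|exact: sp_irr]. Qed.

Lemma gr_trans u v w : SMh V u -> SMh V v -> SMh V w -> glt u v -> glt v w -> glt u w.
Proof.
move=> /SMh_SM Hu /SMh_SM Hv /SMh_SM Hw [h1|[e1 h1]] [h2|[e2 h2]].
- by left; apply: lt_trans h2.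
- by left; rewrite -e2.
- by left; rewrite e1.
- by right; split; [rewrite e1|apply: sp_trans h1 h2].
Qed.

Lemma gr_total u v : SMh V u -> SMh V v -> u <> v -> glt u v \/ glt v u.
Proof.
move=> Hu Hv uv; case: (ltrgtP u.2 v.2) => e; [by left; left|by right; left|].
have u1v1 : u.1 <> v.1 by move=> e1; apply: uv; rewrite [u]surjective_pairing [v]surjective_pairing e e1.
by case: (sp_total (SMh_SM Hu) (SMh_SM Hv) u1v1) => h; [left|right]; right.
Qed.

End Ord.
Section Hom.
Variables (K : fieldType) (R : realType) (n : nat) (V : seq 'rV[R]_n).
Hypothesis M0 : inM V 0.
Variable ltM : 'rV[int]_n -> 'rV[int]_n -> Prop.
Hypothesis ltM_order : monomial_order (SM V) ltM.
Local Notation E := 'rV[int]_n.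
Local Notation slt := (sparse_lt V ltM).
Local Notation glt := (graded_lt V ltM).
Local Notation hom := (@homogenize R n V K).
Local Notation dP := (@deltaA_poly R n V K).

Lemma hom_coef (f : spoly K E) s e :
  (hom f)@_(s, e) = if e == (dP f)%:Z then f@_s else 0.
Proof.
rewrite /homogenize; case: eqP => [->|ne].
  rewrite (@coef_sum_inj K E _ _ (fun s => f@_s) (fun s => (s, (dP f)%:Z))).
    by case: ifP => // /negbT; rewrite -mcoeff_eq0 => /eqP.
  by move=> a b [].
by apply: coef_sum_out => k _; apply/eqP => -[_ e']; apply: ne.
Qed.

Lemma hom_supp (f : spoly K E) u :
  u \in msupp (hom f) <-> u.1 \in msupp f /\ u.2 = (dP f)%:Z.
Proof.
case: u => s e /=; rewrite -mcoeff_neq0. rewrite (hom_coef f s e); have [->|ne] := eqVneq e (dP f)%:Z => /=.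
  by split => [H|[H _]]; [rewrite -mcoeff_neq0|rewrite mcoeff_neq0].
by rewrite eqxx; split => // -[_ /eqP]; rewrite (negbTE ne).
Qed.

Lemma hom0 : hom 0 = 0.
Proof. by rewrite /homogenize msupp0 big_seq_fset0. Qed.

Lemma dP_le (f : spoly K E) s : s \in msupp f -> (deltaA V s <= dP f)%N.
Proof. by move=> sf; apply: (leq_bigmax_seq s). Qed.

Lemma dP_LM (f : spoly K E) m : inKS (SM V) f -> is_LM slt f m -> dP f = deltaA V m.
Proof.
move=> Hf [mf Hm]; apply/eqP; rewrite eqn_leq dP_le // andbT.
apply/bigmax_leqP_seq => s sf _; have [->//|sm] := eqVneq s m.
by case: (Hm s sf (elimN eqP sm)) => [/ltnW|[-> _]].
Qed.

Lemma hom_inKS (f : spoly K E) : inKS (SM V) f -> inKS (SMh V) (hom f).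
Proof.
move=> Hf u /hom_supp [u1 u2]; rewrite [u]surjective_pairing u2.
by apply: (SMh_ge M0 (Hf _ u1)); apply: dP_le.
Qed.

End Hom.
Section Fin.
Variables (R : realType) (n : nat) (V : seq 'rV[R]_n).
Local Notation E := 'rV[int]_n.

Lemma latM_bound : exists B : nat, forall a : E, latM V a -> forall j, `|a 0 j| <= B%:Z.
Proof.
pose C := \sum_(i < size V) \sum_(j < n) `|V`_i 0 j|.
have C0 : 0 <= C by apply: sumr_ge0 => i _; apply: sumr_ge0 => j _.
exists (Num.bound C) => a [lam [lam0 lam1 ea]] j.
have e1 : (a 0 j)%:~R = \sum_(i < size V) lam i * V`_i 0 j :> R.
  have := congr1 (fun M : 'rV[R]_n => M 0 j) ea; rewrite /= !mxE => ->.
  by rewrite summxE; apply: eq_bigr => i _; rewrite mxE.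
have lam_le1 i : lam i <= 1.
  by rewrite -lam1 (bigD1 i) //= lerDl; apply: sumr_ge0.
rewrite -(ler_int R) intr_norm e1.
apply: le_trans (ler_norm_sum _ _ _) _.
apply: le_trans (ltW (archi_boundP C0)).
apply: ler_sum => i _; rewrite normrM (ger0_norm (lam0 i)).
apply: le_trans (_ : `|V`_i 0 j| <= _).
  by rewrite -[X in _ <= X]mul1r; apply: ler_wpM2r.
by rewrite (bigD1 j) //= lerDl; apply: sumr_ge0.
Qed.

End Fin.
Lemma box_list (n N : nat) : exists L : seq 'rV[int]_n,
  forall s : 'rV[int]_n, (forall j, `|s 0 j| <= N%:Z) -> s \in L.
Proof.
exists [seq \row_j (((f : {ffun 'I_n -> 'I_(N + N).+1}) j : nat)%:Z - N%:Z) | f <- enum {ffun 'I_n -> 'I_(N + N).+1}].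
move=> s Hs.
pose f := [ffun j => (inord (absz (s 0 j + N%:Z)%R) : 'I_(N + N).+1)].
have -> : s = \row_j ((f j : nat)%:Z - N%:Z).
  apply/matrixP => i j; rewrite !mxE ffunE (ord1 i) inordK; have := Hs j; lia.
by apply: map_f; rewrite mem_enum.
Qed.

Definition pb (P : Prop) : bool := if excluded_middle_informative P then true else false.
Lemma pbP (P : Prop) : pb P <-> P.
Proof. by rewrite /pb; case: excluded_middle_informative. Qed.

Lemma count_strict (T : eqType) (a1 a2 : pred T) (s : seq T) x :
  (forall y, a1 y -> a2 y) -> x \in s -> a2 x -> ~~ a1 x -> (count a1 s < count a2 s)%N.
Proof.
move=> sub; elim: s => [//|y s IH]; rewrite inE => /orP[/eqP <-|xs] ax nax /=.
  by rewrite (negbTE nax) ax add0n add1n ltnS sub_count.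
apply: leq_trans (_ : (a1 y + count a2 s)%N <= _)%N.
  by rewrite ltn_add2l IH.
by rewrite leq_add2r; case: (a1 y) (sub y) => //= ->.
Qed.

Section WF.
Variables (R : realType) (n : nat) (V : seq 'rV[R]_n).
Variable ltM : 'rV[int]_n -> 'rV[int]_n -> Prop.
Hypothesis ltM_order : monomial_order (SM V) ltM.
Local Notation E := 'rV[int]_n.
Local Notation slt := (sparse_lt V ltM).

Lemma SM_finite (D : nat) : exists L : seq E,
  forall s, SM V s -> (deltaA V s <= D)%N -> s \in L.
Proof.
have [B HB] := latM_bound V.
have [L HL] := box_list n (D * B).
exists L => s Ss sD; apply: HL => j.
have [l [Hl e1 e2]] := deltaA_SMh Ss.
have sl : size l = deltaA V s by apply/eqP; rewrite -eqz_nat -e2.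
apply: le_trans (_ : ((size l) * B)%N%:Z <= _); last first.
  by rewrite lez_nat leq_mul2r sl sD orbT.
rewrite /= in e1; rewrite e1 summxE.
elim: l Hl {e1 e2 sl} => [|a l IH] Hl; first by rewrite big_nil normr0.
rewrite big_cons /= mulSn PoszD.
apply: le_trans (ler_normD _ _) _; apply: lerD.
  by apply: HB; apply: Hl; rewrite inE eqxx.
by apply: IH => b bl; apply: Hl; rewrite inE bl orbT.
Qed.

Lemma slt_deg s t : slt s t -> (deltaA V s <= deltaA V t)%N.
Proof. by case=> [/ltnW|[-> _]]. Qed.

Lemma sp_ind (P : E -> Prop) :
  (forall m, SM V m -> (forall m', SM V m' -> slt m' m -> P m') -> P m) ->
  forall m, SM V m -> P m.
Proof.
move=> H m Sm; have [L HL] := SM_finite (deltaA V m).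
pose cnt x := count (fun t => pb (SM V t /\ slt t x)) L.
suff : forall k x, SM V x -> (deltaA V x <= deltaA V m)%N -> (cnt x <= k)%N -> P x.
  by move/(_ (cnt m) m Sm (leqnn _) (leqnn _)).
elim=> [|k IH] x Sx xD ck; apply: H => // m' Sm' lt'.
- have : (cnt m' < cnt x)%N.
    apply: count_strict (_ : m' \in L) _ _.
    + move=> y /pbP [Sy ly]; apply/pbP; split => //; exact: (@sp_trans R n V ltM ltM_order y m' x Sy Sm' Sx ly lt').
    + by apply: HL => //; apply: leq_trans (slt_deg lt') xD.
    + by apply/pbP.
    + by apply/negP => /pbP [_]; exact: (@sp_irr R n V ltM ltM_order m' Sm').
  by rewrite leqn0 in ck; rewrite (eqP ck).
- apply: IH => //; first by apply: leq_trans (slt_deg lt') xD.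
  rewrite -ltnS; apply: leq_trans ck.
  apply: count_strict (_ : m' \in L) _ _.
  + move=> y /pbP [Sy ly]; apply/pbP; split => //; exact: (@sp_trans R n V ltM ltM_order y m' x Sy Sm' Sx ly lt').
  + by apply: HL => //; apply: leq_trans (slt_deg lt') xD.
  + by apply/pbP.
  + by apply/negP => /pbP [_]; exact: (@sp_irr R n V ltM ltM_order m' Sm').
Qed.

End WF.
Section IdealGen.
Variables (K : fieldType) (E : zmodType) (S : E -> Prop).
Hypothesis S_add : forall a b, S a -> S b -> S (a + b).

Lemma ideal_sum (J : spoly K E -> Prop) (T : eqType) (r : seq T) (F : T -> spoly K E) :
  is_ideal S J -> (forall i, i \in r -> J (F i)) -> J (\sum_(i <- r) F i).
Proof.
case=> _ J0 JD _; elim: r => [|a r IH] H; first by rewrite big_nil.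
rewrite big_cons; apply: JD; first by apply: H; rewrite inE eqxx.
by apply: IH => i ir; apply: H; rewrite inE ir orbT.
Qed.

Lemma inKS_ideal : is_ideal S (@inKS K E S).
Proof.
split => //.
- by move=> e; rewrite msupp0.
- move=> f g Hf Hg e /(fsubsetP (msuppD_le f g)); rewrite in_fsetU => /orP[]; [exact: Hf|exact: Hg].
- move=> h f Hh Hf; rewrite pmul_decomp.
  have Hsum : forall (T : eqType) (r : seq T) (F : T -> spoly K E),
      (forall i, i \in r -> inKS S (F i)) -> inKS S (\sum_(i <- r) F i).
    move=> T r F; elim: r => [|a r IH] H; first by rewrite big_nil => e; rewrite msupp0.
    rewrite big_cons => e /(fsubsetP (msuppD_le _ _)); rewrite in_fsetU => /orP[].
      by apply: H; rewrite inE eqxx.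
    by apply: IH => i ir; apply: H; rewrite inE ir orbT.
  apply: Hsum => u uh w; rewrite -mcoeff_neq0 pmul_mono_coef mulf_eq0 negb_or => /andP[_].
  rewrite mcoeff_neq0 => /Hf Sw; have := S_add (Hh _ uh) Sw.
  by rewrite addrC subrK.
Qed.

Lemma gen_ideal_gen (Gs : spoly K E -> Prop) g : Gs g -> gen_ideal S Gs g.
Proof. by move=> Hg J _ HJ; apply: HJ. Qed.

Lemma gen_ideal_ideal (Gs : spoly K E -> Prop) :
  (forall g, Gs g -> inKS S g) -> is_ideal S (gen_ideal S Gs).
Proof.
move=> HG; split.
- by move=> f Hf; apply: Hf => //; exact: inKS_ideal.
- by move=> J [].
- by move=> f g Hf Hg J HJ HGJ; case: (HJ) => _ _ JD _; apply: JD; [apply: Hf|apply: Hg].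
- by move=> h f Hh Hf J HJ HGJ; case: (HJ) => _ _ _ JM; apply: JM => //; apply: Hf.
Qed.

Lemma gen_ideal_min (Gs : spoly K E -> Prop) (J : spoly K E -> Prop) f :
  is_ideal S J -> (forall g, Gs g -> J g) -> gen_ideal S Gs f -> J f.
Proof. by move=> HJ HG Hf; apply: Hf. Qed.

End IdealGen.
Section CompGen.
Variables (K : fieldType) (A B : zmodType).
Local Notation P := (spoly K (A * B)%type).

Definition gcomp (d : B) (p : P) : spoly K A :=
  \sum_(v <- msupp p) << (if v.2 == d then p@_v else 0) *g v.1 >>.

Lemma gcomp_coef d p s : (gcomp d p)@_s = p@_(s, d).
Proof.
rewrite /gcomp raddf_sum /=.
rewrite (@big_fset_single K _ _ (fun v => (<< (if v.2 == d then p@_v else 0) *g v.1 >> : spoly K A)@_s) (s, d)).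
  rewrite /= mcoeffU eqxx eqxx /=; case: ifP => // /negbT.
  by rewrite -mcoeff_eq0 => /eqP.
move=> [a b] _ ne; rewrite mcoeffU /=.
have [ea|na] := eqVneq a s; last by rewrite /= mulr0n.
have [eb|nb] := eqVneq b d; last by rewrite mul0rn.
by rewrite ea eb eqxx in ne.
Qed.

Lemma gcompD e (p q : P) : gcomp e (p + q) = gcomp e p + gcomp e q.
Proof. by apply/malgP => s; rewrite mcoeffD !gcomp_coef mcoeffD. Qed.

Lemma gcomp0 e : gcomp e (0 : P) = 0.
Proof. by apply/malgP => s; rewrite gcomp_coef !mcoeff0. Qed.

Lemma gcomp_sum e (T : Type) (r : seq T) (F : T -> P) :
  gcomp e (\sum_(i <- r) F i) = \sum_(i <- r) gcomp e (F i).
Proof.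
elim: r => [|a r IH]; first by rewrite !big_nil gcomp0.
by rewrite !big_cons gcompD IH.
Qed.

Lemma gcomp_mono e c u (f : P) :
  gcomp e (pmul << c *g u >> f) = pmul << c *g u.1 >> (gcomp (e - u.2) f).
Proof.
apply/malgP => s; rewrite gcomp_coef !pmul_mono_coef gcomp_coef.
by rewrite pairB.
Qed.
End CompGen.
Section Jc.
Variables (K : fieldType) (R : realType) (n : nat) (V : seq 'rV[R]_n).
Hypothesis M0 : inM V 0.
Local Notation E := 'rV[int]_n.
Local Notation hom := (@homogenize R n V K).
Local Notation dP := (@deltaA_poly R n V K).
Variable I : spoly K E -> Prop.
Local Notation comp := (@gcomp K 'rV[int]_n int).
Hypothesis I_ideal : is_ideal (SM V) I.

Definition Jc (p : spoly K (E * int)%type) : Prop :=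
  inKS (SMh V) p /\ forall e, I (comp e p).

Lemma Jc_ideal : is_ideal (SMh V) Jc.
Proof.
case: I_ideal => IS I0 ID IM.
split.
- by move=> f [].
- by split; [move=> e; rewrite msupp0|move=> e; rewrite gcomp0].
- move=> f g [Hf Jf] [Hg Jg]; split.
    by case: (inKS_ideal K (@SMhD R n V)) => _ _ H _; apply: H.
  by move=> e; rewrite gcompD; apply: ID.
- move=> h f Hh [Hf Jf]; split.
    by case: (inKS_ideal K (@SMhD R n V)) => _ _ _ H; apply: H.
  move=> e; rewrite pmul_decomp gcomp_sum; apply: (ideal_sum (S := SM V)) => //.
  move=> u uh; rewrite gcomp_mono; apply: IM => // w.
  move/(fsubsetP msuppU_le); rewrite inE => /eqP ->.
  exact: SMh_SM (Hh _ uh).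
Qed.

Lemma hom_Jc f : I f -> Jc (hom f).
Proof.
case: I_ideal => IS I0 _ _ If; split; first exact: (hom_inKS M0 (IS _ If)).
move=> e; have -> : comp e (hom f) = if e == (dP f)%:Z then f else 0.
  apply/malgP => s; rewrite gcomp_coef hom_coef.
  by case: ifP => //; rewrite mcoeff0.
by case: ifP.
Qed.

Lemma hom_ideal_Jc p : hom_ideal V I p -> Jc p.
Proof.
by apply: gen_ideal_min; [exact: Jc_ideal|move=> g [f [If ->]]; apply: hom_Jc].
Qed.

End Jc.
Lemma pairB2 (A B : zmodType) (a c : A) (b d : B) : (a, b) - (c, d) = (a - c, b - d).
Proof. by []. Qed.

Lemma pmul2_eq (K : fieldType) (A : zmodType) (p q r : spoly K A) (u v : A) (c1 c2 : K) :
  (forall x, p@_x = c1 * q@_(x - u) + c2 * r@_(x - v)) ->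
  p = pmul << c1 *g u >> q + pmul << c2 *g v >> r.
Proof. by move=> H; apply/malgP => x; rewrite mcoeffD !pmul_mono_coef H. Qed.
Section Main.
Variables (K : fieldType) (R : realType) (n : nat) (V : seq 'rV[R]_n).
Hypothesis M0 : inM V 0.
Variable ltM : 'rV[int]_n -> 'rV[int]_n -> Prop.
Hypothesis ltM_order : monomial_order (SM V) ltM.
Local Notation E := 'rV[int]_n.
Local Notation slt := (sparse_lt V ltM).
Local Notation glt := (graded_lt V ltM).
Local Notation hom := (@homogenize R n V K).
Local Notation dP := (@deltaA_poly R n V K).
Variables (I G : spoly K E -> Prop).
Hypothesis I_ideal : is_ideal (SM V) I.
Hypothesis G_GB : sparse_GB (SM V) slt (div_S V) I G.
Local Notation homG := (fun p => exists g, G g /\ p = hom g).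

Let sirr := @sp_irr R n V ltM ltM_order.
Let strans := @sp_trans R n V ltM ltM_order.
Let stotal := @sp_total R n V ltM ltM_order.
Let girr := @gr_irr R n V ltM ltM_order.
Let gtrans := @gr_trans R n V ltM ltM_order.
Let gtotal := @gr_total R n V ltM ltM_order.

Lemma part3 p : hom_ideal V I p -> p <> 0 ->
  exists g' mg' mf', [/\ homG g', is_LM glt g' mg', is_LM glt p mf' & div_h V mg' mf'].
Proof.
move=> Hp p0; have [HpS Jp] := hom_ideal_Jc M0 I_ideal Hp.
have [[r d] LMp] := LM_exists gtrans gtotal p0 HpS.
have Srd : SMh V (r, d) by apply: HpS; case: LMp.
pose q := gcomp d p.
have Iq : I q by apply: Jp.
have qr : q@_r = p@_(r, d) by rewrite gcomp_coef.
have rq : r \in msupp q by rewrite -mcoeff_neq0 qr mcoeff_neq0; case: LMp.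
have q0 : q <> 0 by move=> e; move: rq; rewrite e msupp0.
have LMq : is_LM slt q r.
  split => // s; rewrite -mcoeff_neq0 gcomp_coef mcoeff_neq0 => sp sr.
  case: LMp => _ H; have : glt (s, d) (r, d) by apply: (H _ sp); move=> [e]; apply: sr.
  by case => [|[_ //]]; rewrite ltxx.
case: I_ideal => IS _ _ _.
case: G_GB => GI _ GB.
have [g [mg [mf [Gg LMg LMf dv]]]] := GB q Iq q0.
have emf : mf = r by apply: (LM_unique sirr strans (IS _ Iq) LMf LMq).
subst mf.
have Sg := IS _ (GI _ Gg).
have dg := dP_LM Sg LMg.
exists (hom g), (mg, (deltaA V mg)%:Z), (r, d); split => //.
- by exists g.
- split.
    by apply/hom_supp => /=; split; [case: LMg|rewrite dg].
  move=> [s e] /hom_supp [/= sg ee] ne; rewrite ee dg; right; split => //=.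
  case: LMg => _; apply => // es; apply: ne; by rewrite es ee dg.
- have [dn edn dnr] := SMh_deg Srd; rewrite /= in edn dnr; subst d.
  case: dv => w [Sw ew dw].
  have [k ek] := SMh_nat Sw.
  have e1 : mg + w.1 = r by have := congr1 fst ew.
  have e2 : (deltaA V mg)%:Z + w.2 = (deltaA V r)%:Z by have := congr1 snd ew.
  exists (w.1, (k + (dn - deltaA V r))%N%:Z); split.
  + apply: SMh_pad => //; rewrite -ek; exact: Sw.
  + rewrite pairD /= e1; congr (_, _); rewrite ek in e2; lia.
  + by rewrite /sparse_delta /=; exact: dw.
Qed.

Lemma hG_inKS p : homG p -> inKS (SMh V) p.
Proof.
case=> g [Gg ->]; case: I_ideal => IS _ _ _; case: G_GB => GI _ _.
exact: (hom_inKS M0 (IS _ (GI _ Gg))).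
Qed.

Local Notation H := (gen_ideal (SMh V) homG).

Lemma Hid : is_ideal (SMh V) H.
Proof. exact: (gen_ideal_ideal (@SMhD R n V) hG_inKS). Qed.

Lemma mono_inKS (S : 'rV[int]_n * int -> Prop) c u : S u -> @inKS K _ S << c *g u >>.
Proof. by move=> Su w /(fsubsetP msuppU_le); rewrite inE => /eqP ->. Qed.

Lemma mono_inKS1 (S : E -> Prop) c u : S u -> inKS S (<< c *g u >> : spoly K E).
Proof. by move=> Su w /(fsubsetP msuppU_le); rewrite inE => /eqP ->. Qed.

Lemma division f : I f -> H (hom f).
Proof.
case: I_ideal => IS I0 ID IM.
case: Hid => _ H0 HD HM.
suff main : forall m, SM V m -> forall f, I f -> is_LM slt f m -> H (hom f).
  move=> If; have [->|f0] := eqVneq f 0; first by rewrite hom0.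
  have [m LMf] := LM_exists strans stotal (elimN eqP f0) (IS _ If).
  by apply: (main m) => //; apply: (IS _ If); case: LMf.
apply: (sp_ind ltM_order) => m Sm IH {}f If LMf.
have Sf := IS f If.
case: G_GB => GI _ GB.
have mf : m \in msupp f by case: LMf.
have f0 : f <> 0 by move=> e; move: mf; rewrite e msupp0.
have [g [mg [mf' [Gg LMg LMf' dv]]]] := GB f If f0.
have emf : mf' = m by apply: (LM_unique sirr strans Sf LMf').
subst mf'.
have Sg := IS _ (GI _ Gg).
have dg := dP_LM Sg LMg.
have df := dP_LM Sf LMf.
case: dv => w [Sw ew dw]; rewrite /sparse_delta /= in dw.
pose w1 := w.1.
have dw1 : (deltaA V mg + deltaA V w1)%N = deltaA V m by exact: dw.
have e1 : mg + w1 = m by have := congr1 fst ew.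
have Sw1 : SM V w1 := SMh_SM Sw.
have Smg : SM V mg by apply: Sg; case: LMg.
have gmg : g@_mg != 0 by rewrite mcoeff_neq0; case: LMg.
pose c := f@_m / g@_mg.
pose f' := f + pmul << (- c) *g w1 >> g.
have If' : I f' by apply: ID => //; apply: IM; [exact: (mono_inKS1 Sw1)|exact: GI _ Gg].
have cf' s : f'@_s = f@_s + (- c) * g@_(s - w1) by rewrite mcoeffD pmul_mono_coef.
have supp' : forall s, s \in msupp f' -> slt s m.
  move=> s; rewrite -mcoeff_neq0 cf' => nz.
  have [esm|nsm] := eqVneq s m.
    have mgm : m - w1 = mg by rewrite -e1 addrK.
    by move: nz; rewrite esm mgm /c mulNr divfK // subrr eqxx.
  have [gz|gnz] := eqVneq (g@_(s - w1)) 0.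
    move: nz; rewrite gz mulr0 addr0 mcoeff_neq0 => sf.
    by case: LMf => _; apply => //; apply/eqP.
  pose t := s - w1.
  have tg : t \in msupp g by rewrite -mcoeff_neq0.
  have St : SM V t := Sg _ tg.
  have es : s = t + w1 by rewrite /t subrK.
  have ntm : t != mg by apply: contra_neq nsm => et; rewrite es et e1.
  have dsub := deltaA_sub St Sw1; rewrite -es in dsub.
  case: LMg => _ /(_ t tg (elimN eqP ntm)) [lt|[eq ltm]].
    by left; lia.
  have : (deltaA V s <= deltaA V m)%N by lia.
  rewrite leq_eqVlt => /orP[/eqP eqd|]; last by left.
  right; split => //.
  case: ltM_order => _ _ _ comp _.
  by rewrite es -e1; apply: comp.
have dle : (dP f' <= deltaA V m)%N.
  by apply/bigmax_leqP_seq => s sf _; apply: slt_deg; apply: supp'.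
pose k := (deltaA V m - dP f')%N.
have eq : hom f = pmul << c *g (w1, (deltaA V w1)%:Z) >> (hom g)
                  + pmul << 1 *g (0, k%:Z) >> (hom f').
  apply: pmul2_eq => -[s e].
  rewrite !pairB2 !hom_coef subr0 cf' dg df.
  have [->|ne] := eqVneq e (deltaA V m)%:Z.
    have -> : ((deltaA V m)%:Z - (deltaA V w1)%:Z == (deltaA V mg)%:Z) = true by apply/eqP; lia.
    have -> : ((deltaA V m)%:Z - k%:Z == (dP f')%:Z) = true by apply/eqP; lia.
    by rewrite mul1r mulNr addrCA subrr addr0.
  have -> : (e - (deltaA V w1)%:Z == (deltaA V mg)%:Z) = false.
    by apply/negbTE/eqP => h; move/eqP: ne; apply; lia.
  have -> : (e - k%:Z == (dP f')%:Z) = false.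
    by apply/negbTE/eqP => h; move/eqP: ne; apply; lia.
  by rewrite !mulr0 addr0.
rewrite eq; apply: HD.
  apply: HM; last by apply: gen_ideal_gen; exists g.
  apply: mono_inKS; exact: (deltaA_SMh Sw1).
apply: HM; first by apply: mono_inKS; apply: SMh0k.
have [->|f'0] := eqVneq f' 0; first by rewrite hom0.
have [m' LMf2] := LM_exists strans stotal (elimN eqP f'0) (IS _ If').
have m'f : m' \in msupp f' by case: LMf2.
by apply: (IH m') => //; [apply: (IS _ If')|apply: supp'].
Qed.
Lemma final : sparse_GB (SMh V) glt (div_h V) (hom_ideal V I) homG.
Proof.
case: G_GB => GI _ _; split.
- by move=> p [g [Gg ->]] J HJ HI; apply: HI; exists g; split => //; exact: GI.
- move=> f; split.
    by move=> Hf; apply: Hf; [exact: Hid | move=> p [g' [Ig' ->]]; exact: division].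
  move=> Hf J HJ HI; apply: Hf => // p [g [Gg ->]]; apply: HI; exists g; split => //; exact: GI.
- exact: part3.
Qed.
End Main.

Theorem mainTheorem7
  (K : fieldType) (charK0 : [pchar K] =i pred0)
  (R : realType) (n : nat) (V : seq 'rV[R]_n)
  (M0 : inM V 0)
  (SM_pointed : pointed (SM V))
  (SMh_pointed : pointed (SMh V))
  (ltM : 'rV[int]_n -> 'rV[int]_n -> Prop)
  (ltM_order : monomial_order (SM V) ltM)
  (I G : spoly K 'rV[int]_n -> Prop)
  (I_ideal : is_ideal (SM V) I)
  (G_GB : sparse_GB (SM V) (sparse_lt V ltM) (div_S V) I G) :
  sparse_GB (SMh V) (graded_lt V ltM) (div_h V) (hom_ideal V I)
    (fun p => exists g, G g /\ p = homogenize V g).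
Proof. exact: (final M0 ltM_order I_ideal G_GB). Qed.
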